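(* Let $L$ be an invertible linear map on $\mathcal{S}^n$ such that $L(CP_n)\subseteq CP_n$. If $L$ is a standard map, then $L=\mathcal{L}_{A,B}$ for suitable entrywise nonnegative matrices $A,B\in M_n(\mathbb{R})$. Conversely, for $n\le 4$, if $L=\mathcal{L}_{A,B}$ with $B$ invertible, then $L$ is a standard map.
   Context: $\mathcal{S}^n$ denotes the space of real symmetric $n\times n$ matrices. $CP_n=\{BB^t: B \text{ a real entrywise nonnegative } n\times k \text{ matrix for some } k\}$ is the cone of completely positive matrices. A standard map on $\mathcal{S}^n$ is a map of the form $X\mapsto RXR^t$ for a fixed $R\in M_n(\mathbb{R})$. For $A,B\in M_n(\mathbb{R})$, the generalized Lyapunov map is $\mathcal{L}_{A,B}(X)=AXB+B^tXA^t$ on $\mathcal{S}^n$. *)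

(* Defs.v *)
From mathcomp Require Import all_boot all_order all_algebra.
From mathcomp Require Import reals.
Set Implicit Arguments. Unset Strict Implicit. Unset Printing Implicit Defensive.
Import Order.TTheory GRing.Theory Num.Theory.
Local Open Scope ring_scope.

Definition symmx (R : realType) (n : nat) (X : 'M[R]_n) : Prop := X^T = X.

Definition nonneg_mx (R : realType) (m k : nat) (B : 'M[R]_(m, k)) : Prop :=
  forall i j, 0 <= B i j.

Definition CP (R : realType) (n : nat) (X : 'M[R]_n) : Prop :=
  exists k (B : 'M[R]_(n, k)), nonneg_mx B /\ X = B *m B^T.

(* A map L : 'M_n -> 'M_n viewed as a map on S^n (only its values on
   symmetric matrices matter): it maps S^n into S^n and is linear there. *)
Definition linear_on_sym (R : realType) (n : nat) (L : 'M[R]_n -> 'M[R]_n) : Prop :=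
  (forall X, symmx X -> symmx (L X)) /\
  (forall (a : R) X Y, symmx X -> symmx Y -> L (a *: X + Y) = a *: L X + L Y).

Definition invertible_on_sym (R : realType) (n : nat) (L : 'M[R]_n -> 'M[R]_n) : Prop :=
  (forall X Y, symmx X -> symmx Y -> L X = L Y -> X = Y) /\
  (forall Y, symmx Y -> exists2 X, symmx X & L X = Y).

Definition preserves_CP (R : realType) (n : nat) (L : 'M[R]_n -> 'M[R]_n) : Prop :=
  forall X, CP X -> CP (L X).

Definition standard_map (R : realType) (n : nat) (L : 'M[R]_n -> 'M[R]_n) : Prop :=
  exists Q : 'M[R]_n, forall X, symmx X -> L X = Q *m X *m Q^T.

Definition lyap (R : realType) (n : nat) (A B : 'M[R]_n) (X : 'M[R]_n) : 'M[R]_n :=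
  A *m X *m B + B^T *m X *m A^T.

Definition is_lyap (R : realType) (n : nat) (L : 'M[R]_n -> 'M[R]_n) (A B : 'M[R]_n) : Prop :=
  forall X, symmx X -> L X = lyap A B X.

(* Main.v *)
Require Import Defs.
From mathcomp Require Import all_boot all_order all_algebra.
From mathcomp Require Import reals.
From mathcomp Require Import ring lra.
From Stdlib Require Import Classical.
Import Order.TTheory GRing.Theory Num.Theory.
Local Open Scope ring_scope.

Section H.
Variable R : realType.

Lemma cp_entry {n} {X : 'M[R]_n} : CP X -> forall a b, 0 <= X a b.
Proof.
case=> k [C [HC ->]] a b; rewrite mxE; apply: sumr_ge0 => i _.
by rewrite mxE; apply: mulr_ge0.
Qed.

Lemma cp_psd {n} {X : 'M[R]_n} : CP X -> forall z : 'cV_n, 0 <= (z^T *m X *m z) 0 0.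
Proof.
case=> k [C [HC ->]] z.
have -> : z^T *m (C *m C^T) *m z = (C^T *m z)^T *m (C^T *m z).
  by rewrite trmx_mul trmxK !mulmxA.
rewrite mxE; apply: sumr_ge0 => i _; rewrite mxE.
by rewrite -expr2 sqr_ge0.
Qed.

Lemma cp_rank1 {n} {x : 'cV[R]_n} : nonneg_mx x -> CP (x *m x^T).
Proof. by move=> Hx; exists 1%N, x. Qed.

Lemma sym_rank1 {n} {x : 'cV[R]_n} : symmx (x *m x^T).
Proof. by rewrite /symmx trmx_mul trmxK. Qed.

Lemma dd n (M : 'M[R]_n) (i j : 'I_n) :
  ((delta_mx i 0 : 'cV[R]_n)^T *m M *m (delta_mx j 0 : 'cV[R]_n)) 0 0 = M i j.
Proof. by rewrite trmx_delta -rowE -colE !mxE. Qed.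

Lemma md m n (M : 'M[R]_(m,n)) (a : 'I_m) (j : 'I_n) : (M *m (delta_mx j 0 : 'cV[R]_n)) a 0 = M a j.
Proof. by rewrite -colE mxE. Qed.

Lemma e_nonneg {n} (i : 'I_n) : nonneg_mx (delta_mx i 0 : 'cV[R]_n).
Proof. by move=> a b; rewrite mxE ler0n. Qed.

Lemma e2_nonneg {n} (i j : 'I_n) t : 0 <= t ->
  nonneg_mx (delta_mx i 0 + t *: delta_mx j 0 : 'cV[R]_n).
Proof. by move=> ht a b; rewrite !mxE addr_ge0 ?mulr_ge0 ?ler0n. Qed.

Lemma one1 (U : 'M[R]_(1,1)) : U^T 0 0 = U 0 0.
Proof. by rewrite mxE. Qed.

Lemma mul11 m (U : 'M[R]_(1,m)) (V : 'M[R]_(m,1)) (W : 'M[R]_(1,1)) :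
  (U *m V *m W) 0 0 = (U *m V) 0 0 * W 0 0.
Proof. by rewrite [in LHS]mxE big_ord1. Qed.

Lemma quad (p1 p2 r1 r2 : R) : 0 <= p1 -> 0 <= p2 -> r1 <= 0 -> r2 <= 0 ->
  (forall t, 0 <= t -> 0 <= (p1 + t * r1) * (p2 + t * r2)) -> p1 * r2 = p2 * r1.
Proof.
move=> h1 h2 h3 h4 H.
have [r10|r1n] := eqVneq r1 0.
  have [r20|r2n] := eqVneq r2 0; first by rewrite r10 r20 !mulr0.
  have r2lt : r2 < 0 by rewrite lt_neqAle r2n.
  rewrite r10 mulr0.
  have [p10|p1n] := eqVneq p1 0; first by rewrite p10 mul0r.
  have p1lt : 0 < p1 by rewrite lt_neqAle eq_sym p1n.
  have t0 : 0 <= (p2 + 1) / (- r2) by apply: divr_ge0; lra.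
  have := H _ t0.
  have -> : p2 + (p2 + 1) / - r2 * r2 = -1 by field; lra.
  rewrite r10 mulr0 addr0 => h; exfalso; nra.
have r1lt : r1 < 0 by rewrite lt_neqAle r1n.
have [r20|r2n] := eqVneq r2 0.
  rewrite r20 mulr0.
  have [p20|p2n] := eqVneq p2 0; first by rewrite p20 mul0r.
  have p2lt : 0 < p2 by rewrite lt_neqAle eq_sym p2n.
  have t0 : 0 <= (p1 + 1) / (- r1) by apply: divr_ge0; lra.
  have := H _ t0.
  have -> : p1 + (p1 + 1) / - r1 * r1 = -1 by field; lra.
  rewrite r20 mulr0 addr0 => h; exfalso; nra.
have r2lt : r2 < 0 by rewrite lt_neqAle r2n.
set t := - (p1 * r2 + p2 * r1) / (2 * r1 * r2).
have t0 : 0 <= t by rewrite /t; apply: divr_ge0; nra.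
have := H t t0 => h.
have e : (p1 + t * r1) * (p2 + t * r2) * (4 * (r1 * r2)) =
    - (p1 * r2 - p2 * r1) ^+ 2.
  rewrite /t; field.
  by rewrite r1n r2n.
have : 0 <= (p1 + t * r1) * (p2 + t * r2) * (4 * (r1 * r2)) by apply: mulr_ge0 => //; nra.
rewrite e => h'; apply/eqP; rewrite -subr_eq0; apply/eqP; nra.
Qed.
Lemma Qe n (Q : 'M[R]_n) k j t (a : 'I_n) :
  (Q *m (delta_mx k 0 + t *: delta_mx j 0 : 'cV[R]_n)) a 0 = Q a k + t * Q a j.
Proof. by rewrite mulmxDr -scalemxAr -!colE !mxE. Qed.

Lemma sign_core n (Q : 'M[R]_n) : Q \in unitmx ->
  (forall x : 'cV[R]_n, nonneg_mx x -> forall a b, 0 <= (Q *m x) a 0 * (Q *m x) b 0) ->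
  forall a0 j0, Q a0 j0 < 0 -> forall b k, Q b k <= 0.
Proof.
move=> QU H a0 j0 hq b k.
have cj c : Q c j0 <= 0.
  by have := H _ (e_nonneg j0) c a0; rewrite !md => h; nra.
have [->|kj] := eqVneq k j0; first exact: cj.
rewrite leNgt; apply/negP => hb.
have ck c : 0 <= Q c k.
  by have := H _ (e_nonneg k) c b; rewrite !md => h; nra.
have eq c : Q a0 k * Q c j0 = Q c k * Q a0 j0.
  apply: quad => // t t0.
  by have := H _ ((@e2_nonneg _ k j0 t t0)) a0 c; rewrite !Qe.
set v : 'cV[R]_n := Q a0 j0 *: delta_mx k 0 - Q a0 k *: delta_mx j0 0.
have Qv : Q *m v = 0.
  apply/matrixP => c z; rewrite ord1 [RHS]mxE.
  rewrite mulmxBr -!scalemxAr -!colE !mxE eq; ring.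
have : v = 0 by rewrite -(mulKmx QU v) Qv mulmx0.
move/matrixP => /(_ k 0); rewrite !mxE eqxx (negbTE kj) /=.
rewrite mulr1 mulr0 subr0 => h; lra.
Qed.

Lemma std_unit n (L : 'M[R]_n -> 'M[R]_n) (Q : 'M[R]_n) :
  invertible_on_sym L -> (forall X, symmx X -> L X = Q *m X *m Q^T) -> Q \in unitmx.
Proof.
move=> [_ Hs] HQ.
have [X sX] : exists2 X, symmx X & L X = 1%:M by apply: Hs; rewrite /symmx trmx1.
rewrite HQ // => /(congr1 determinant).
rewrite !det_mulmx det_tr det1 => h.
rewrite unitmxE unitfE; apply/eqP => h0; move: h; rewrite h0 !mul0r => /eqP.
by rewrite eq_sym oner_eq0.
Qed.

Lemma part1 n (L : 'M[R]_n -> 'M[R]_n) :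
  invertible_on_sym L -> preserves_CP L -> standard_map L ->
  exists A B : 'M[R]_n, [/\ nonneg_mx A, nonneg_mx B & is_lyap L A B].
Proof.
move=> Hi Hp [Q HQ].
have QU := @std_unit n L Q Hi HQ.
have H (P : 'M[R]_n) : (forall X, symmx X -> L X = P *m X *m P^T) ->
    (forall x : 'cV[R]_n, nonneg_mx x -> forall a b, 0 <= (P *m x) a 0 * (P *m x) b 0).
  move=> HP x hx a b.
  have := cp_entry (Hp _ (cp_rank1 hx)) a b.
  rewrite HP; last exact: sym_rank1.
  have -> : P *m (x *m x^T) *m P^T = (P *m x) *m (P *m x)^T.
    by rewrite trmx_mul !mulmxA.
  by rewrite [X in _ <= X -> _]mxE big_ord1 [(_^T) _ _]mxE.
have fin0 (P0 : 'M[R]_n) : nonneg_mx P0 -> (forall X, symmx X -> L X = P0 *m X *m P0^T) ->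
    exists A B : 'M[R]_n, [/\ nonneg_mx A, nonneg_mx B & is_lyap L A B].
  move=> hP0 HP0; exists P0, (2^-1 *: P0^T); split => //.
    by move=> i j; rewrite !mxE; apply: mulr_ge0 => //; rewrite invr_ge0 ler0n.
  move=> X sX; rewrite HP0 // /lyap. rewrite [(_ *: _)^T]linearZ /= trmxK -scalemxAr -!scalemxAl.
  rewrite -scalerDl.
  have -> : (2^-1 + 2^-1 : R) = 1 by field.
  by rewrite scale1r.
case: (classic (nonneg_mx Q)) => [hn|hn]; first exact: fin0.
have [a0 [j0 hneg]] : exists a0 j0, Q a0 j0 < 0.
  apply: NNPP => hc; apply: hn => i j; rewrite leNgt; apply/negP => h.
  by apply: hc; exists i, j.
apply: (fin0 (- Q)).
  move=> i j; rewrite mxE oppr_ge0.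
  exact: (@sign_core n Q QU (H Q HQ) a0 j0 hneg i j).
move=> X sX; rewrite HQ // linearN /= mulNmx mulmxN. by rewrite mulNmx opprK.
Qed.
Lemma trZ m n (s : R) (A : 'M[R]_(m,n)) : (s *: A)^T = s *: A^T.
Proof. by apply/matrixP => i j; rewrite !mxE. Qed.

Lemma dd2 n (M : 'M[R]_n) (i j : 'I_n) :
  (delta_mx i 0 : 'cV[R]_n)^T *m M *m (delta_mx j 0 : 'cV[R]_n) = (M i j)%:M.
Proof. by apply/matrixP => a b; rewrite !ord1 dd !mxE eqxx mulr1n. Qed.

Lemma bil n (M : 'M[R]_n) (i j k l : 'I_n) s t :
  ((delta_mx i 0 + s *: delta_mx j 0 : 'cV[R]_n)^T *m M
     *m (delta_mx k 0 + t *: delta_mx l 0 : 'cV[R]_n)) 0 0 =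
  M i k + t * M i l + s * M j k + s * t * M j l.
Proof.
rewrite linearD linearZ /= [(_ + _)^T]linearD /= trZ !mulmxDl -!scalemxAl.
rewrite !dd2 !mxE /=; ring.
Qed.

Lemma lin1 (a b : R) : (forall t, 0 <= a + t * b) -> b = 0.
Proof.
move=> H; apply/eqP; apply/negP => /negP hb; have := H (- (a + 1) / b).
by rewrite divfK // => h; lra.
Qed.

Lemma lin2 (a b : R) : 0 <= b -> (forall t, 0 <= (a + t * b) * (1 + t)) -> a = b.
Proof.
move=> hb H; apply/eqP; apply/negP => /negP hab.
have hb1 : b + 1 != 0 by apply/lt0r_neq0; lra.
have := H (-1 - (a - b) / (b + 1)).
have -> : (a + (-1 - (a - b) / (b + 1)) * b) * (1 + (-1 - (a - b) / (b + 1))) =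
  - ((a - b) / (b + 1)) ^+ 2 by field.
have : 0 < ((a - b) / (b + 1)) ^+ 2.
  have hc : (a - b) / (b + 1) != 0 by rewrite mulf_neq0 ?invr_eq0 // subr_eq0.
  by rewrite lt_def sqrf_eq0 hc sqr_ge0.
move=> h1 h2; lra.
Qed.

Lemma one_sum (U V : 'M[R]_1) : (U *m V + V^T *m U^T) 0 0 = 2 * (U 0 0 * V 0 0).
Proof. rewrite !mxE !big_ord1 !mxE; ring. Qed.

Lemma idE n (a b : 'I_n) : (1%:M : 'M[R]_n) a b = (a == b)%:R.
Proof. by rewrite mxE. Qed.

Lemma part2 n (L : 'M[R]_n -> 'M[R]_n) (A B : 'M[R]_n) :
  preserves_CP L -> B \in unitmx -> is_lyap L A B -> standard_map L.
Proof.
move=> Hp BU HL.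
set M := (invmx B)^T *m A.
have hA : A = B^T *m M by rewrite /M mulmxA -trmx_mul mulVmx // trmx1 mul1mx.
have F (x : 'cV[R]_n) (w : 'cV[R]_n) : nonneg_mx x ->
    0 <= (w^T *m M *m x) 0 0 * (x^T *m w) 0 0.
  move=> hx.
  have := cp_psd (Hp _ (cp_rank1 hx)) (invmx B *m w).
  rewrite HL; last exact: sym_rank1.
  set z := invmx B *m w.
  set u := z^T *m A *m x; set v := x^T *m B *m z.
  have -> : z^T *m lyap A B (x *m x^T) *m z = u *m v + v^T *m u^T.
    rewrite /lyap mulmxDr mulmxDl /u /v !trmx_mul !trmxK !mulmxA //.
  have eu : u = w^T *m M *m x.
    by rewrite /u /z trmx_mul /M trmx_inv !mulmxA.
  have ev : v = x^T *m w.
    by rewrite /v /z -mulmxA mulKVmx.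
  rewrite one_sum eu ev.
  move=> h; nra.
have G (i j k l : 'I_n) s t : 0 <= s ->
    0 <= (M k i + s * M k j + t * M l i + t * s * M l j) *
         ((1%:M : 'M[R]_n) i k + t * (1%:M : 'M[R]_n) i l + s * (1%:M : 'M[R]_n) j k
           + s * t * (1%:M : 'M[R]_n) j l).
  move=> s0.
  have := F _ (delta_mx k 0 + t *: delta_mx l 0) (@e2_nonneg _ i j s s0).
  rewrite bil -[X in (X *m _) 0 0]mulmx1 bil.
  by [].
have pos i : 0 <= M i i.
  have := G i i i i 0 0 (lexx 0); rewrite !idE eqxx /= => h; nra.
have diag i k : k != i -> M k i = 0.
  move=> hk; apply: (@lin1 (M i i)) => t.
  have := G i i i k 0 t (lexx 0); rewrite !idE eqxx eq_sym (negbTE hk) /= => h.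
  nra.
have eqd i j : j != i -> M i i = M j j.
  move=> hk; apply: lin2 => // t.
  have := G i j i j 1 t ler01; rewrite !idE eqxx eq_sym (negbTE hk) /= (diag _ _ hk).
  rewrite (diag j i) 1?eq_sym // eqxx => h.
  by rewrite !mulr0 !mul1r !addr0 mulr1 in h.
have [lam [lam0 hM]] : exists lam, 0 <= lam /\ M = lam%:M.
  case: (pickP (fun i : 'I_n => true)) => [i0 _ | none].
    exists (M i0 i0); split => //; apply/matrixP => i j; rewrite [RHS]mxE.
    have [<-|hij] := eqVneq i j.
      by rewrite mulr1n; have [->|h0] := eqVneq i i0 => //; rewrite (eqd i0 i).
    by rewrite mulr0n diag // eq_sym.
  by exists 0; split => //; apply/matrixP => i; have := none i.
have hA' : A = lam *: B^T by rewrite hA hM mul_mx_scalar.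
exists (Num.sqrt (2 * lam) *: B^T) => X sX.
rewrite HL // /lyap hA' trZ trmxK -scalemxAl -!scalemxAr -!scalemxAl.
rewrite trZ trmxK -!scalemxAr scalerA -expr2 sqr_sqrtr ?mulr_ge0 ?ler0n //.
by rewrite -scalerDl mulr2n mulrDl !mul1r.
Qed.
End H.

Theorem mainTheorem4 (R : realType) (n : nat) (L : 'M[R]_n -> 'M[R]_n) :
  linear_on_sym L -> invertible_on_sym L -> preserves_CP L ->
  (standard_map L ->
     exists A B : 'M[R]_n, [/\ nonneg_mx A, nonneg_mx B & is_lyap L A B]) /\
  ((n <= 4)%N ->
     forall A B : 'M[R]_n, B \in unitmx -> is_lyap L A B -> standard_map L).
Proof.
move=> _ Hi Hp; split.
  exact: part1.
by move=> _ A B BU HL; exact: (@part2 R n L A B Hp BU HL).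
Qed.
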